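(* Let $\mathcal{T}$ be a teacher class over $\mathcal{X},\mathcal{Y},\Phi$ and $H$ a non-empty history consistent with $\mathcal{T}$, and let $N$ be the number of labels $y\in\mathcal{Y}$ that do not appear in any pair of $H$. Then \[\mathrm{Ldim}(\mathrm{DtO}(\mathcal{T},H))\geq\mathrm{DFFdim}(\mathcal{T},H)-N.\]
   Context: Setting. A teacher over $\mathcal{X},\mathcal{Y},\Phi$ ($\mathcal{Y}$ finite, $\Phi$ a set of Boolean features on $\mathcal{X}$, $\bot$ a null symbol) is a pair $T=(\ell,\psi)$ with $\ell:\mathcal{X}\to\mathcal{Y}$ and $\psi:\mathcal{X}\times\mathcal{X}\to\Phi\cup\{\bot\}$ such that whenever $\ell(x)\neq\ell(\hat x)$, $\phi:=\psi(x,\hat x)\in\Phi$, $\phi(x)=1$ and $\phi(\hat x)=0$. A teacher class is a set of teachers. A history is a non-empty set $H\subseteq\mathcal{X}\times\mathcal{Y}$, $H_{\mathcal{X}}=\{x:\exists y,(x,y)\in H\}$; a teacher $(\ell,\psi)$ is consistent with $H$ if $\ell(x)=y$ for all $(x,y)\in H$; $\mathcal{T}_H$ is the set of teachers in $\mathcal{T}$ consistent with $H$, and $\mathcal{T}$ is consistent with $H$ if $\mathcal{T}_H\neq\emptyset$. DFF dimension. A DFF tree is a rooted tree whose nodes are triples $\langle y,\phi,x\rangle$ with $y\in\mathcal{Y}\cup\{\bot\}$, $\phi\in\Phi\cup\{\bot\}$, $x\in\mathcal{X}\cup\{\bot\}$, such that the root has $y=\phi=\bot$, a node has $x=\bot$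 iff it is a leaf, every edge is labeled by a pair $(\hat x,\hat y)\in\mathcal{X}\times\mathcal{Y}$, and every non-root node $\langle y,\phi,x\rangle$ with incoming edge $(\hat x,\hat y)$ has $\phi\neq\bot$ whenever $y\neq\hat y$. For a parent–child pair $\langle\cdot,\cdot,x\rangle\xrightarrow{(\hat x,\hat y)}\langle y,\phi,\cdot\rangle$ on a path, $(x,y)$ is called a labeled example in that path. A path from the root is consistent with a teacher $(\ell,\psi)$ if for every such parent–child pair on it, $\ell(x)=y$ and, if $y\neq\hat y$, $\psi(x,\hat x)=\phi$. Given $\mathcal{T}$ consistent with $H$, a DFF tree is shattered by $\mathcal{T}$ and $H$ if: (1) every non-root node $\langle y,\phi,x\rangle$ with incoming edge $(\hat x,\hat y)$ has $y\neq\hat y$; (2) the labels of the outgoing edges of each non-leaf node $v$ are exactly the pairs that belong to $H$ or are labeled examples in the path from the root to $v$; (3) every root-to-leaf path is consistent with some teacher in $\mathcal{T}_H$; (4) all root-to-leaf paths have the same number of edges, called the height. $\mathrm{DFFdim}(\mathcal{T},H)$ is the maximal height of a DFF tree shattered by $\mathcal{T}$ and $H$. $\mathrm{Ldim}$ is the (multiclass) Littlestone dimension: the maximal depth of a complete binary tree whose internal nodes are labeled by examples and whose two outgoing edges at each internal node are labeled by two distinct labels, such that for every root-to-leaf path some function in the class agrees with all (example, edge label) pairs on the path. Mapping DtO: given $\mathcal{T}$ and $H$, let $\mathcal{X}''=\mathcal{X}\setminus H_{\mathcal{X}}$; then $\mathrm{DtO}(\mathcal{T},H)=\{\ell|_{\mathcal{X}''}:(\ell,\psi)\in\mathcal{T}\}$.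 *)

(* Defs.v *)
From mathcomp Require Import all_boot.
From mathcomp Require Import boolp.
From Stdlib Require List.

Unset Printing Implicit Defensive.

(* Teachers.  Phi is the set of Boolean features (a set of functions
   X -> bool); the null symbol bot is encoded as None.              *)

Definition teacher (X : Type) (Y : Type) :=
  ((X -> Y) * (X -> X -> option (X -> bool)))%type.

Definition is_teacher {X : Type} {Y : Type} (Phi : (X -> bool) -> Prop)
  (T : teacher X Y) : Prop :=
  forall x xh : X, T.1 x <> T.1 xh ->
    exists phi, T.2 x xh = Some phi /\ Phi phi /\ phi x = true /\ phi xh = false.

Definition consistent {X : Type} {Y : Type} (T : teacher X Y)
  (H : X * Y -> Prop) : Prop :=
  forall x y, H (x, y) -> T.1 x = y.

Definition restrict {X : Type} {Y : Type} (TC : teacher X Y -> Prop)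
  (H : X * Y -> Prop) : teacher X Y -> Prop :=
  fun T => TC T /\ consistent T H.

(* DFF trees.  A node is a triple <y, phi, x> (each component optional,
   None = bot) together with its children, indexed by the label
   (xh, yh) of the outgoing edge (None = no edge with that label).   *)

Inductive dfftree (X : Type) (Y : Type) : Type :=
  DNode : option Y -> option (X -> bool) -> option X ->
          (X * Y -> option (dfftree X Y)) -> dfftree X Y.
Arguments DNode {X Y}.

Definition tval {X Y} (t : dfftree X Y) := let: DNode y _ _ _ := t in y.
Definition tphi {X Y} (t : dfftree X Y) := let: DNode _ f _ _ := t in f.
Definition tx {X Y} (t : dfftree X Y) := let: DNode _ _ x _ := t in x.
Definition tch {X Y} (t : dfftree X Y) := let: DNode _ _ _ c := t in c.

(* A step of a path from the root: (x, (xh, yh), y, phi) records a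
   parent <.,.,x>, the edge label (xh, yh) and the child's <y, phi, .>. *)
Definition step (X : Type) (Y : Type) :=
  (X * (X * Y) * option Y * option (X -> bool))%type.

Inductive reach (X : Type) (Y : Type) :
    dfftree X Y -> seq (step X Y) -> dfftree X Y -> Prop :=
| reach_nil t : reach X Y t [::] t
| reach_cons t e t1 p t2 x :
    tx t = Some x -> tch t e = Some t1 -> reach X Y t1 p t2 ->
    reach X Y t ((x, e, tval t1, tphi t1) :: p) t2.
Arguments reach {X Y}.
Arguments reach_nil {X Y}.
Arguments reach_cons {X Y}.

Definition lab_ex {X : Type} {Y : Type} (p : seq (step X Y)) (e : X * Y) : Prop :=
  exists eh f, List.In (e.1, eh, Some e.2, f) p.

Definition is_leaf {X : Type} {Y : Type} (v : dfftree X Y) : Prop :=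
  forall e, tch v e = None.

Definition dff_tree_wf {X : Type} {Y : Type} (Phi : (X -> bool) -> Prop)
  (t : dfftree X Y) : Prop :=
  [/\ tval t = None, tphi t = None,
      (forall f, tphi t = Some f -> Phi f),
      (forall p v, reach t p v -> (tx v = None <-> is_leaf v)) &
      (forall p v, reach t p v -> forall x e y f, List.In (x, e, y, f) p ->
         (forall g, f = Some g -> Phi g) /\ (y <> Some e.2 -> f <> None))].

Definition path_consistent {X : Type} {Y : Type} (T : teacher X Y)
  (p : seq (step X Y)) : Prop :=
  forall x e y f, List.In (x, e, y, f) p ->
    y = Some (T.1 x) /\ (y <> Some e.2 -> T.2 x e.1 = f).

Definition dff_shattered {X : Type} {Y : Type} (Phi : (X -> bool) -> Prop)
  (TC : teacher X Y -> Prop) (H : X * Y -> Prop) (t : dfftree X Y) (d : nat)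
  : Prop :=
  [/\ dff_tree_wf Phi t,
      (* (1) *)
      (forall p v, reach t p v -> forall x e y f, List.In (x, e, y, f) p ->
          y <> Some e.2),
      (forall p v x, reach t p v -> tx v = Some x ->
          forall e, tch v e <> None <-> (H e \/ lab_ex p e)),
      (forall p v, reach t p v -> is_leaf v ->
          exists T, restrict TC H T /\ path_consistent T p) &
      (forall p v, reach t p v -> is_leaf v -> size p = d)].

Definition DFFdim_ge {X : Type} {Y : Type} (Phi : (X -> bool) -> Prop)
  (TC : teacher X Y -> Prop) (H : X * Y -> Prop) (d : nat) : Prop :=
  exists t, dff_shattered Phi TC H t d.

(* binary trees: internal node = example z with the two edge labels *)
Inductive ltree (Z : Type) (Y : Type) : Type :=
| LLeaf : ltree Z Y
| LNode : Z -> Y -> Y -> ltree Z Y -> ltree Z Y -> ltree Z Y.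
Arguments LLeaf {Z Y}.
Arguments LNode {Z Y}.

Fixpoint lshattered {Z : Type} {Y : Type} (C : (Z -> Y) -> Prop)
  (t : ltree Z Y) (d : nat) : Prop :=
  match t, d with
  | LLeaf, 0 => exists h, C h
  | LNode z y0 y1 l r, d'.+1 =>
      y0 <> y1 /\
      lshattered (fun h => C h /\ h z = y0) l d' /\
      lshattered (fun h => C h /\ h z = y1) r d'
  | _, _ => False
  end.

Definition Ldim_ge {Z : Type} {Y : Type} (C : (Z -> Y) -> Prop) (d : nat) : Prop :=
  exists t, lshattered C t d.

Definition Xpp {X : Type} {Y : Type} (H : X * Y -> Prop) : Type :=
  {x : X | ~ exists y, H (x, y)}.

Definition DtO {X : Type} {Y : Type} (TC : teacher X Y -> Prop)
  (H : X * Y -> Prop) : (Xpp H -> Y) -> Prop :=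
  fun g => exists T, TC T /\ g = (fun z : Xpp H => T.1 (proj1_sig z)).

Definition missing_labels {X : Type} {Y : finType} (H : X * Y -> Prop) : nat :=
  #|[pred y : Y | ~~ `[< exists x, H (x, y) >]]|.

(* Main.v *)
Require Import Defs.
From mathcomp Require Import all_boot.
From mathcomp Require Import boolp.
From mathcomp Require Import zify.
Require Import Defs.

Fixpoint dind {X Y : Type} (P : dfftree X Y -> Prop)
  (f : forall y ph x c, (forall e t', c e = Some t' -> P t') -> P (DNode y ph x c))
  (t : dfftree X Y) {struct t} : P t :=
  match t with DNode y ph x c =>
    f y ph x c (fun e t' Heq =>
      match c e as o return o = Some t' -> P t' with
      | Some s => fun h => eq_ind s P (dind P f s) t' (Some_inj h)
      | None => fun h => False_ind _ (ltac:(discriminate h))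
      end Heq)
  end.

Lemma In_cat {A : Type} (a : A) (p q : seq A) :
  List.In a (p ++ q) <-> List.In a p \/ List.In a q.
Proof.
elim: p => [|b p IH] /=; first by split; [right|case].
rewrite IH; tauto.
Qed.

Lemma reach_app {X Y : Type} (t v w : dfftree X Y) p q :
  reach t p v -> reach v q w -> reach t (p ++ q) w.
Proof.
elim=> [//|t0 e t1 p0 t2 x hx hc _ IH] hq /=.
exact: (reach_cons _ _ _ _ _ _ hx hc (IH hq)).
Qed.

Lemma reach_snoc {X Y : Type} (t v c : dfftree X Y) p x e :
  reach t p v -> tx v = Some x -> tch v e = Some c ->
  reach t (p ++ [:: (x, e, tval c, tphi c)]) c.
Proof.
move=> hr hx hc; apply: (reach_app _ _ _ _ _ hr).
exact: (reach_cons _ _ _ _ _ _ hx hc (reach_nil _)).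
Qed.

Lemma lsh_nonempty {Z Y : Type} (t : ltree Z Y) : forall C n,
  lshattered C t n -> exists h, C h.
Proof.
elim: t => [|z y0 y1 l IHl r IHr] C [|n] //=.
move=> [_ [hl _]]; have [h [hh _]] := IHl _ _ hl; by exists h.
Qed.

Lemma lsh_mono {Z Y : Type} (t : ltree Z Y) : forall C C' n,
  (forall h, C h -> C' h) -> lshattered C t n -> lshattered C' t n.
Proof.
elim: t => [|z y0 y1 l IHl r IHr] C C' [|n] //= hC.
  by move=> [h /hC]; exists h.
move=> [hne [hl hr]]; split=> //; split.
  by apply: (IHl _ _ _ _ hl) => h [/hC].
by apply: (IHr _ _ _ _ hr) => h [/hC].
Qed.

Lemma lsh_trunc {Z Y : Type} (t : ltree Z Y) : forall C n m,
  lshattered C t n -> m <= n -> Ldim_ge C m.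
Proof.
elim: t => [|z y0 y1 l IHl r IHr] C [|n] [|m] //=.
- by move=> h _; exists LLeaf.
- by move=> h _; exists LLeaf; exact: (lsh_nonempty (LNode z y0 y1 l r) C n.+1 h).
- move=> [hne [hl hr]] hmn.
  have [tl htl] := IHl _ _ _ hl hmn.
  have [tr htr] := IHr _ _ _ hr hmn.
  by exists (LNode z y0 y1 tl tr).
Qed.

Lemma Ldim_mono {Z Y : Type} (C C' : (Z -> Y) -> Prop) n m :
  (forall h, C h -> C' h) -> Ldim_ge C n -> m <= n -> Ldim_ge C' m.
Proof.
move=> hC [t ht] hmn; apply: (lsh_trunc t C' n m) => //.
exact: (lsh_mono _ _ _ _ hC ht).
Qed.
Lemma leaf_exists {X Y : Type} Phi TC H (t : dfftree X Y) d
  (hs : dff_shattered Phi TC H t d) :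
  forall v p, reach t p v -> exists q w, reach v q w /\ is_leaf w.
Proof.
case: hs => [[_ _ _ w4 _] _ _ _ _].
apply: (@dind X Y) => y ph ox c IH p hr.
have [hl|hnl] := pselect (is_leaf (DNode y ph ox c)).
  by exists [::], (DNode y ph ox c); split=> //; exact: reach_nil.
have [x hx] : exists x, ox = Some x.
  case: ox hr hnl => [x|] hr hnl; first by exists x.
  by case: hnl; apply/(w4 _ _ hr).
subst ox.
have [e he] : exists e, c e <> None.
  apply: contrapT => hne; apply: hnl => e /=.
  by case E: (c e) => [a|] //; case: hne; exists e; rewrite E.
case E: (c e) => [c1|]; last by [].
have hr1 := reach_snoc _ _ _ _ _ _ hr (erefl : tx (DNode y ph (Some x) c) = Some x) E.
have [q [w [hq hw]]] := IH e c1 E _ hr1.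
exists ((x, e, tval c1, tphi c1) :: q), w; split=> //.
exact: reach_cons.
Qed.

Lemma teach {X Y : Type} Phi TC H (t : dfftree X Y) d
  (hs : dff_shattered Phi TC H t d) v p :
  reach t p v -> exists T, restrict TC H T /\ path_consistent T p.
Proof.
move=> hr; have [q [w [hq hw]]] := leaf_exists _ _ _ _ _ hs v p hr.
have hr' := reach_app _ _ _ _ _ hr hq.
case: hs => [_ _ _ c3 _].
have [T [hT hpc]] := c3 _ _ hr' hw.
exists T; split=> // x e y f hin; apply: hpc; apply/In_cat; by left.
Qed.
Definition mlab {X : Type} {Y : finType} (H : X * Y -> Prop) (p : seq (step X Y)) : nat :=
  #|[pred y : Y | ~~ `[< exists x, H (x, y) \/ lab_ex p (x, y) >]]|.

Lemma lab_ex_cat {X Y : Type} (p s : seq (step X Y)) e :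
  lab_ex p e -> lab_ex (p ++ s) e.
Proof. by move=> [eh [f hin]]; exists eh, f; apply/In_cat; left. Qed.

Lemma mlab_mono {X : Type} {Y : finType} (H : X * Y -> Prop) p s :
  mlab H (p ++ s) <= mlab H p.
Proof.
apply: subset_leq_card; apply/subsetP => y; rewrite !inE.
move=> /asboolPn hn; apply/asboolPn => -[x hx]; apply: hn; exists x.
by case: hx => [h|h]; [left|right; apply: lab_ex_cat].
Qed.

Lemma mlab_lt {X : Type} {Y : finType} (H : X * Y -> Prop) p s ys :
  ~ (exists x, H (x, ys) \/ lab_ex p (x, ys)) ->
  (exists x, lab_ex (p ++ s) (x, ys)) ->
  mlab H (p ++ s) < mlab H p.
Proof.
move=> hn [x hx]; apply: proper_card; apply/properP; split.
  apply/subsetP => y; rewrite !inE.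
  move=> /asboolPn hn'; apply/asboolPn => -[x' hx']; apply: hn'; exists x'.
  by case: hx' => [h|h]; [left|right; apply: lab_ex_cat].
exists ys; rewrite !inE.
  by apply/asboolPn.
by apply/negPn/asboolP; exists x; right.
Qed.

Lemma mlab_nil {X : Type} {Y : finType} (H : X * Y -> Prop) :
  mlab H [::] = missing_labels H.
Proof.
apply: eq_card => y; rewrite !inE; congr (~~ _).
apply/idP/idP => /asboolP h; apply/asboolP.
  by case: h => x [h|[eh [f []]]]; exists x.
by case: h => x hx; exists x; left.
Qed.
Definition Cls {X : Type} {Y : Type} (TC : teacher X Y -> Prop)
  (H : X * Y -> Prop) (p : seq (step X Y)) : (Xpp H -> Y) -> Prop :=
  fun h => exists T, restrict TC H T /\ path_consistent T p /\
     h = (fun z : Xpp H => T.1 (proj1_sig z)).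

Lemma pc_cat {X Y : Type} (T : teacher X Y) p s :
  path_consistent T (p ++ s) -> path_consistent T p.
Proof. by move=> hpc x e y f hin; apply: hpc; apply/In_cat; left. Qed.

Lemma Cls_cat {X Y : Type} TC (H : X * Y -> Prop) p s h :
  Cls TC H (p ++ s) h -> Cls TC H p h.
Proof. by move=> [T [hT [hpc ->]]]; exists T; split=> //; split=> //; apply: pc_cat hpc. Qed.

Lemma main_ind {X : Type} {Y : finType} Phi TC (H : X * Y -> Prop) (t : dfftree X Y) d
  (hH : exists e, H e) (hs : dff_shattered Phi TC H t d) :
  forall v p, reach t p v -> Ldim_ge (Cls TC H p) ((d - size p) - mlab H p).
Proof.
have hs' := hs; case: hs' => [[w1 w2 w3 w4 w5] c1 c2 c3 c4].
apply: (@dind X Y) => y ph ox c IH p hr.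
case hD: ((d - size p) - mlab H p) => [|D].
  have [T [hT hpc]] := teach _ _ _ _ _ hs _ _ hr.
  by exists LLeaf; exists (fun z => T.1 (proj1_sig z)), T.
have [hl|hnl] := pselect (is_leaf (DNode y ph ox c)).
  by move: hD; rewrite (c4 _ _ hr hl) subnn sub0n.
have [x hx] : exists x, ox = Some x.
  case: ox hr hnl {hD IH} => [x|] hr hnl; first by exists x.
  by case: hnl; apply/(w4 _ _ hr).
subst ox.
have hrc : forall e c0, c e = Some c0 ->
    reach t (p ++ [:: (x, e, tval c0, tphi c0)]) c0.
  by move=> e c0 E; apply: (reach_snoc _ _ _ _ _ _ hr _ E).
have hin : forall (s : step X Y), List.In s (p ++ [:: s]).
  by move=> s; apply/In_cat; right; left.
have hlab : forall e c0, c e = Some c0 ->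
    exists T, restrict TC H T /\ path_consistent T (p ++ [:: (x, e, tval c0, tphi c0)])
      /\ tval c0 = Some (T.1 x).
  move=> e c0 E; have [T [hT hpc]] := teach _ _ _ _ _ hs _ _ (hrc _ _ E).
  exists T; split=> //; split=> //.
  by have [h1 _] := hpc _ _ _ _ (hin _).
have hedge : forall e, H e \/ lab_ex p e -> exists c0, c e = Some c0.
  move=> e he; have := (c2 _ _ x hr erefl e).2 he.
  rewrite /=; by case: (c e) => [a|] // _; eexists.
have hA : ~ exists y0, H (x, y0).
  move=> [y0 hy]; have [c0 E] := hedge (x, y0) (or_introl hy).
  have [T [[_ hcons] [hpc hv]]] := hlab _ _ E.
  apply: (c1 _ _ (hrc _ _ E) _ _ _ _ (hin _)) => /=.
  by rewrite hv (hcons _ _ hy).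
pose z : Xpp H := exist _ x hA.
have [[e1 [e2 [c01 [c02 [E1 [E2 hne]]]]]]|hall] := pselect
  (exists e1 e2 c01 c02, c e1 = Some c01 /\ c e2 = Some c02 /\ tval c01 <> tval c02).
  have [T1 [_ [_ hv1]]] := hlab _ _ E1.
  have [T2 [_ [_ hv2]]] := hlab _ _ E2.
  have hle : forall e c0, c e = Some c0 ->
      D <= (d - size (p ++ [:: (x, e, tval c0, tphi c0)])) -
           mlab H (p ++ [:: (x, e, tval c0, tphi c0)]).
    move=> e c0 _; have := mlab_mono H p [:: (x, e, tval c0, tphi c0)].
    rewrite size_cat /=; lia.
  have hcl : forall e c0 yy, c e = Some c0 -> tval c0 = Some yy ->
      forall h, Cls TC H (p ++ [:: (x, e, tval c0, tphi c0)]) h ->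
        Cls TC H p h /\ h z = yy.
    move=> e c0 yy E hv h hC; split; first exact: Cls_cat hC.
    case: hC => T [_ [hpc ->]] /=.
    have [h1 _] := hpc _ _ _ _ (hin _).
    by move: h1; rewrite hv => -[].
  have [tl htl] := Ldim_mono _ _ _ _ (hcl _ _ _ E1 hv1) (IH _ _ E1 _ (hrc _ _ E1)) (hle _ _ E1).
  have [tr htr] := Ldim_mono _ _ _ _ (hcl _ _ _ E2 hv2) (IH _ _ E2 _ (hrc _ _ E2)) (hle _ _ E2).
  exists (LNode z (T1.1 x) (T2.1 x) tl tr); split; last by split.
  by move=> heq; apply: hne; rewrite hv1 hv2 heq.
have hall' : forall e1 e2 c01 c02, c e1 = Some c01 -> c e2 = Some c02 ->
    tval c01 = tval c02.
  move=> e1 e2 c01 c02 E1 E2; apply: contrapT => hne; apply: hall.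
  by exists e1, e2, c01, c02.
have [e0 he0] := hH.
have [c0 E0] := hedge e0 (or_introl he0).
have [T0 [_ [_ hv0]]] := hlab _ _ E0.
set ys := T0.1 x in hv0.
have hnot : ~ exists x', H (x', ys) \/ lab_ex p (x', ys).
  move=> [x' hx']; have [c' E'] := hedge _ hx'.
  apply: (c1 _ _ (hrc _ _ E') _ _ _ _ (hin _)) => /=.
  by rewrite (hall' _ _ _ _ E' E0).
have hlt := mlab_lt H p [:: (x, e0, tval c0, tphi c0)] ys hnot.
have {}hlt : mlab H (p ++ [:: (x, e0, tval c0, tphi c0)]) < mlab H p.
  apply: hlt; exists x, e0, (tphi c0); rewrite -hv0; exact: hin.
apply: (Ldim_mono _ _ _ _ (@Cls_cat X Y TC H p _) (IH _ _ E0 _ (hrc _ _ E0))).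
move: hlt hD; rewrite size_cat /=; lia.
Qed.

Theorem mainTheorem10 (X : Type) (Y : finType) (Phi : (X -> bool) -> Prop)
  (TC : teacher X Y -> Prop) (H : X * Y -> Prop)
  (hTC : forall T, TC T -> is_teacher Phi T)
  (hH : exists p, H p)
  (hcons : exists T, restrict TC H T)
  (d : nat) :
  DFFdim_ge Phi TC H d -> Ldim_ge (DtO TC H) (d - missing_labels H).
Proof.
move=> [t hs].
have := main_ind _ _ _ _ _ hH hs t [::] (reach_nil _).
rewrite mlab_nil subn0 => hL.
apply: (Ldim_mono _ _ _ _ _ hL (leqnn _)).
by move=> h [T [[hT _] [_ ->]]]; exists T.
Qed.
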